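(* Every graph of pathwidth at most $1$ and order $n$ has at most $2^{n/2}$ independent dominating sets (equivalently, maximal independent sets). The bound is attained by the path on $2$ vertices.
   Context: An independent dominating set of $G=(V,E)$ is a set $D\subseteq V$ with no edge inside $D$ such that every vertex outside $D$ has at least one neighbour in $D$; i.e. a $(\{0\},\mathbb{N}^+)$-dominating set. Order = number of vertices; pathwidth is the standard notion. *)

(* Defs.v *)
From mathcomp Require Import all_boot.
Set Implicit Arguments. Unset Strict Implicit. Unset Printing Implicit Defensive.

Definition simple_graph (T : finType) (e : rel T) : Prop :=
  symmetric e /\ irreflexive e.

Definition independent_dominating (T : finType) (e : rel T) (D : {set T}) : bool :=
  [forall x in D, forall y in D, ~~ e x y] &&
  [forall x in ~: D, exists y in D, e x y].

Definition num_ids (T : finType) (e : rel T) : nat :=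
  #|[set D : {set T} | independent_dominating e D]|.

Definition path_decomposition (T : finType) (e : rel T) (B : seq {set T}) : Prop :=
  (forall v : T, exists2 X, X \in B & v \in X) /\
  (forall u v : T, e u v -> exists2 X, X \in B & (u \in X) && (v \in X)) /\
  (forall (v : T) (i j k : nat), i <= j -> j <= k -> k < size B ->
      v \in nth set0 B i -> v \in nth set0 B k -> v \in nth set0 B j).

(* Width of a decomposition = (max bag size) - 1; pathwidth <= k iff there
   is a path decomposition all of whose bags have size at most k+1. *)
Definition pathwidth_le (T : finType) (e : rel T) (k : nat) : Prop :=
  exists B : seq {set T}, path_decomposition e B /\
    (forall X, X \in B -> #|X| <= k.+1).

Definition P2 : rel 'I_2 := fun x y => x != y.

(* Main.v *)
Require Import Defs.
From mathcomp Require Import all_boot.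
From mathcomp Require Import zify.
Set Implicit Arguments. Unset Strict Implicit. Unset Printing Implicit Defensive.

Definition ids (T : finType) (e : rel T) (S D : {set T}) : bool :=
  [&& D \subset S, [forall x in D, forall y in D, ~~ e x y] &
      [forall x in S :\: D, exists y in D, e x y]].

Definition cnt (T : finType) (e : rel T) (S : {set T}) := #|[set D | ids e S D]|.

Lemma idsP (T : finType) (e : rel T) (S D : {set T}) : reflect (D \subset S /\ (forall x y, x \in D -> y \in D -> ~~ e x y) /\
   (forall x, x \in S -> x \notin D -> exists2 y, y \in D & e x y)) (ids e S D).
Proof.
apply: (iffP and3P) => [[sub /forall_inP ind /forall_inP dom]|[sub [ind dom]]].
- split=> //; split.
  + move=> x y xD yD. by move: (ind x xD) => /forall_inP /(_ y yD).
  + move=> x xS xD. have : x \in S :\: D by rewrite in_setD xD xS.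
    by move=> /dom /exists_inP [y yD exy]; exists y.
- split=> //.
  + apply/forall_inP => x xD; apply/forall_inP => y yD; exact: ind.
  + apply/forall_inP => x; rewrite in_setD => /andP [xD xS].
    have [y yD exy] := dom x xS xD. by apply/exists_inP; exists y.
Qed.

Lemma cnt_inj (T : finType) (e : rel T) (S S' : {set T}) (u : T) (P : pred {set T}) :
  (forall D, P D -> u \in D) ->
  (forall D, P D -> ids e S' (D :\ u)) ->
  #|[set D | P D]| <= cnt e S'.
Proof.
move=> Pu Pids.
rewrite -(@card_in_imset _ _ (fun D => D :\ u)); last first.
  move=> D1 D2; rewrite !inE => /Pu h1 /Pu h2 E.
  by rewrite -(setD1K h1) -(setD1K h2) E.
apply: subset_leq_card; apply/subsetP => D' /imsetP [D]; rewrite inE => PD ->.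
by rewrite inE Pids.
Qed.

Lemma sqr_aux (c a b N : nat) : c <= a + b -> a ^ 2 <= N -> b ^2 <= N -> c ^ 2 <= 4 * N.
Proof. move=> h1 h2 h3. have : c ^ 2 <= (a+b)^2 by rewrite leq_exp2r. nia. Qed.

Lemma count_main (T : finType) (e : rel T) :
  symmetric e -> irreflexive e ->
  (forall S : {set T}, S != set0 -> exists2 u, u \in S &
     forall w1 w2, w1 \in S -> w2 \in S -> e u w1 -> e u w2 -> w1 = w2) ->
  forall n (S : {set T}), #|S| <= n -> cnt e S ^ 2 <= 2 ^ #|S|.
Proof.
move=> esym eirr Hdeg; elim=> [|n IH] S.
  rewrite leqn0 cards_eq0 => /eqP ->; rewrite cards0 /cnt.
  have : #|[set D | ids e set0 D]| <= #|[set (set0 : {set T})]|.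
    apply: subset_leq_card; apply/subsetP => D; rewrite !inE => /idsP [sub _].
    by rewrite subset0 in sub.
  rewrite cards1; case: #|_| => [|[|]] //.
move=> Sn.
case: (eqVneq S set0) => [->|Sne].
  apply: (IH set0); by rewrite cards0.
have [u uS uniq] := Hdeg S Sne.
have cS1 : #|S :\ u| = #|S| - 1 by rewrite (cardsD1 u S) uS; lia.
case: (boolP [exists v in S, e u v]) => [/exists_inP [v vS euv] | /exists_inP nov].
- have vu : v != u by apply/eqP => E; rewrite E eirr in euv.
  pose S1 := S :\: [set u; v].
  pose S2 := [set x in S | (x != v) && ~~ e v x].
  have cS1' : #|S1| = #|S| - 2.
    rewrite /S1 cardsD (setIidPr _); last by apply/subsetP => x; rewrite !inE => /orP [] /eqP ->.
    rewrite cards2 eq_sym vu; lia.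
  have sub2 : S2 \subset S1.
    apply/subsetP => x; rewrite !inE => /andP [xS /andP [xv nevx]].
    rewrite xS andbT; apply/norP; split; last exact: xv. apply/eqP => E; rewrite E esym euv in nevx; by [].
  have cS2 : #|S2| <= #|S| - 2 by rewrite -cS1'; apply: subset_leq_card.
  have h1 := IH S1 ltac:(lia).
  have h2 := IH S2 ltac:(lia).
  have le1 : #|[set D | ids e S D && (u \in D)]| <= cnt e S1.
    apply: (@cnt_inj _ _ S S1 u) => D; first by case/andP.
    case/andP => /idsP [sub [ind dom]] uD; apply/idsP; split; [|split].
    + apply/subsetP => x; rewrite !inE => /andP [xu xD].
      rewrite (subsetP sub _ xD) andbT; apply/norP; split=> //; apply/eqP => E; rewrite E in xD.
      by move: (ind u v uD xD); rewrite euv.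
    + by move=> x y; rewrite !inE => /andP [_ xD] /andP [_ yD]; apply: ind.
    + move=> x; rewrite !inE => /andP [/norP [xu xv] xS]; rewrite xu /= => xD.
      have [y yD exy] := dom x xS xD; exists y => //; rewrite !inE yD andbT.
      apply/eqP => E; rewrite E in exy; rewrite esym in exy.
      by rewrite (uniq x v xS vS exy euv) eqxx in xv.
  have le2 : #|[set D | ids e S D && (v \in D)]| <= cnt e S2.
    apply: (@cnt_inj _ _ S S2 v) => D; first by case/andP.
    case/andP => /idsP [sub [ind dom]] vD; apply/idsP; split; [|split].
    + apply/subsetP => x; rewrite !inE => /andP [xv xD].
      rewrite (subsetP sub _ xD) xv /=. exact: ind.
    + by move=> x y; rewrite !inE => /andP [_ xD] /andP [_ yD]; apply: ind.
    + move=> x; rewrite !inE => /andP [xS /andP [xv nevx]]; rewrite xv /= => xD.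
      have [y yD exy] := dom x xS xD; exists y => //; rewrite !inE yD andbT.
      apply/eqP => E; rewrite E esym in exy. by rewrite exy in nevx.
  have split : cnt e S <= #|[set D | ids e S D && (u \in D)]| + #|[set D | ids e S D && (v \in D)]|.
    rewrite /cnt; apply: leq_trans (leq_card_setU _ _) ; apply: subset_leq_card.
    apply/subsetP => D; rewrite !inE => Dids; rewrite Dids /=.
    case: (boolP (u \in D)) => //= uD.
    have /idsP [_ [_ dom]] := Dids.
    have [y yD ey] := dom u uS uD.
    have yS : y \in S by case/idsP: Dids => sub _; apply: (subsetP sub).
    by rewrite -(uniq y v yS vS ey euv).
  have hS : 2 <= #|S|.
    have := subset_leq_card (_ : [set u; v] \subset S).
    rewrite cards2 eq_sym vu; apply; apply/subsetP => x; rewrite !inE => /orP [] /eqP -> //.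
  have e2 : 2 ^ #|S2| <= 2 ^ (#|S| - 2) by apply: leq_pexp2l.
  have e4 : 2 ^ #|S| = 4 * 2 ^ (#|S| - 2) by rewrite -(expnD 2 2); congr (_ ^ _); lia.
  rewrite e4; rewrite cS1' in h1.
  have h2' := leq_trans h2 e2.
  move: (2 ^ (#|S| - 2)) h1 h2' => N h1 h2'.
  have hh : cnt e S <= cnt e S1 + cnt e S2 by lia.
  exact: sqr_aux hh h1 h2'.
- have all_u : forall D, ids e S D -> u \in D.
    move=> D /idsP [sub [_ dom]]; apply/negPn/negP => uD.
    have [y yD ey] := dom u uS uD. apply: nov; exists y => //; exact: (subsetP sub).
  have := @cnt_inj _ e S (S :\ u) u (ids e S) all_u.
  have : forall D, ids e S D -> ids e (S :\ u) (D :\ u).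
    move=> D /idsP [sub [ind dom]]; apply/idsP; split; [|split].
    + by apply: setSD.
    + by move=> x y; rewrite !inE => /andP [_ xD] /andP [_ yD]; apply: ind.
    + move=> x; rewrite !inE => /andP [xu xS]; rewrite xu /= => xD.
      have [y yD exy] := dom x xS xD; exists y => //; rewrite !inE yD andbT.
      apply/eqP => E; rewrite E esym in exy. apply: nov; by exists x.
  move=> h /(_ h) hc.
  have h1 := IH (S :\ u) ltac:(lia).
  rewrite cS1 in h1.
  have hS : 1 <= #|S| by rewrite card_gt0; apply/set0Pn; exists u.
  have e4 : 2 ^ #|S| = 2 * 2 ^ (#|S| - 1) by rewrite -(expnD 2 1); congr (_ ^ _); lia.
  rewrite e4; move: (2 ^ (#|S| - 1)) h1 => N h1.
  have : cnt e S <= cnt e (S :\ u) by move: hc; rewrite /cnt; congr (_ <= _); apply: eq_card => D; rewrite !inE.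
  move=> hc'. have : cnt e S ^ 2 <= cnt e (S :\ u) ^ 2 by rewrite leq_exp2r.
  lia.
Qed.

Definition Lastb (T : finType) (B : seq {set T}) (u : T) (p : nat) : bool :=
  [&& p < size B, u \in nth set0 B p &
      [forall k : 'I_(size B), (p < k) ==> (u \notin nth set0 B k)]].

Lemma lastE (T : finType) (B : seq {set T}) u i : i < size B -> u \in nth set0 B i ->
  exists2 q, i <= q & Lastb B u q.
Proof.
move=> iB ui.
pose P := fun j => (j < size B) && (u \in nth set0 B j).
have exP : exists j, P j by exists i; rewrite /P iB ui.
have ub : forall j, P j -> j <= size B by move=> j /andP [/ltnW].
case: (ex_maxnP exP ub) => q /andP [qs uq] qmax.
exists q; first by apply: qmax; rewrite /P iB ui.
rewrite /Lastb qs uq /=; apply/forallP => k; apply/implyP => pk; apply/negP => uk.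
have := qmax k; rewrite /P ltn_ord uk => /(_ isT); lia.
Qed.

Lemma pw1_deg (T : finType) (e : rel T) :
  symmetric e -> irreflexive e -> pathwidth_le e 1 ->
  forall S : {set T}, S != set0 -> exists2 u, u \in S &
     forall w1 w2, w1 \in S -> w2 \in S -> e u w1 -> e u w2 -> w1 = w2.
Proof.
move=> esym eirr [B [[cov [edg intv]] bsz]] S /set0Pn [u0 u0S].
pose Q p := [exists u in S, Lastb B u p].
have exQ : exists p, Q p.
  have [X XB u0X] := cov u0; case/(nthP set0): XB => i iB Xi.
  have ui : u0 \in nth set0 B i by rewrite Xi.
  have [q _ Lq] := lastE iB ui.
  by exists q; apply/exists_inP; exists u0.
case: (ex_minnP exQ) => p /exists_inP [u uS Lu] pmin.
exists u => //.
move: (Lu) => /and3P [pB up /forallP pl].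
have inbag : forall w, w \in S -> e u w -> (w \in nth set0 B p) && (w != u).
  move=> w wS euw.
  have wu : w != u by apply/eqP => E; rewrite E eirr in euw.
  rewrite wu andbT.
  have [X XB /andP [uX wX]] := edg u w euw; case/(nthP set0): XB => j jB Xj.
  have jp : j <= p.
    rewrite leqNgt; apply/negP => pj.
    by have := pl (Ordinal jB); rewrite /= pj Xj uX.
  have wj : w \in nth set0 B j by rewrite Xj.
  have [q jq Lq] := lastE jB wj.
  have pq : p <= q by apply: pmin; apply/exists_inP; exists w.
  move: Lq => /and3P [qB wq _].
  exact: (intv w j p q jp pq qB wj wq).
move=> w1 w2 w1S w2S e1 e2.
case/andP: (inbag w1 w1S e1) => b1 n1.
case/andP: (inbag w2 w2S e2) => b2 n2.
apply/eqP; apply/negPn/negP => n12.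
have := bsz _ (mem_nth set0 pB).
have sub : u |: [set w1; w2] \subset nth set0 B p.
  apply/subsetP => x; rewrite !inE => /or3P [] /eqP -> //.
have := subset_leq_card sub.
rewrite cardsU1 cards2 n12 !inE negb_or eq_sym n1 eq_sym n2 /=.
by move=> h1 h2; have := leq_trans h1 h2.
Qed.

Lemma P2_ids (D : {set 'I_2}) : independent_dominating P2 D = (#|D| == 1).
Proof.
apply/idP/cards1P.
- case/andP => /forall_inP ind /forall_inP dom.
  have Dn : D != set0.
    case: (boolP (ord0 \in D)) => [h|h]; first by apply/set0Pn; exists ord0.
    have : ord0 \in ~: D by rewrite inE.
    by move=> /dom /exists_inP [y yD _]; apply/set0Pn; exists y.
  case/set0Pn: Dn => x xD; exists x; apply/setP => y; rewrite inE.
  apply/idP/eqP => [yD|->//]; apply/eqP; move: (ind x xD) => /forall_inP /(_ y yD).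
  by rewrite /P2 negbK eq_sym.
- case=> x ->; apply/andP; split.
  + apply/forall_inP => a; rewrite inE => /eqP ->; apply/forall_inP => b; rewrite inE => /eqP ->.
    by rewrite /P2 eqxx.
  + apply/forall_inP => y; rewrite !inE => yx; apply/exists_inP; exists x; rewrite ?inE //.
Qed.
Lemma num_P2 : num_ids P2 = 2.
Proof.
transitivity 'C(#|'I_2|, 1); last by rewrite card_ord.
rewrite -card_draws /num_ids; apply: eq_card => D; by rewrite !inE P2_ids.
Qed.

Theorem mainTheorem6 :
  (forall (T : finType) (e : rel T),
      simple_graph e -> pathwidth_le e 1 ->
      num_ids e ^ 2 <= 2 ^ #|T|) /\
  (simple_graph P2 /\ pathwidth_le P2 1 /\ num_ids P2 ^ 2 = 2 ^ #|'I_2|).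
Proof.
split.
  move=> T e [esym eirr] pw.
  have := count_main esym eirr (pw1_deg esym eirr pw) (leqnn #|[set: T]|).
  rewrite cardsT.
  have -> : cnt e [set: T] = num_ids e.
    rewrite /cnt /num_ids; apply: eq_card => D; rewrite [in LHS]inE [in RHS]inE.
    by rewrite /ids /independent_dominating subsetT setTD.
  by [].
split.
  split; first by move=> x y; rewrite /P2 eq_sym.
  by move=> x; rewrite /P2 eqxx.
split.
  exists [:: setT]; split; last first.
    by move=> X; rewrite inE => /eqP ->; rewrite cardsT card_ord.
  split; first by move=> v; exists setT; rewrite ?inE.
  split; first by move=> u v _; exists setT; rewrite ?inE.
  move=> v i j k ij jk k1 _ _; rewrite /= in k1; have j0 : j = 0 by lia. by rewrite j0 nth0 inE.
by rewrite num_P2 card_ord.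
Qed.
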